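(* Let $T$ be a complete discrete valuation ring with fraction field $K$ and uniformizer $t$. Let $\widehat R_0 \supset T$ be a complete discrete valuation ring with uniformizer $t$ and fraction field $F_0$, with absolute value $|t^n u| = \alpha^{-n}$ ($\alpha>1$ fixed, $u \in \widehat R_0^\times$). Let $F_1, F_2 \subset F_0$ be subfields containing $T$ and let $V \subset F_1 \cap \widehat R_0$, $W \subset F_2 \cap \widehat R_0$ be $t$-adically complete $T$-submodules with $V + W = \widehat R_0$, $V \cap t\widehat R_0 = tV$ and $W \cap t\widehat R_0 = tW$. Let $a,b,c$ be positive integers, let $\Omega \subset F_0^a \times F_0^b$ be an open neighborhood of $(0,0)$ and let $f : \Omega \to F_0^c$ be an analytic map. Let $f^a(x) = f(x,0)$ and $f^b(y) = f(0,y)$ (defined near $0$). Assume (i) $f(0,0)=0$ and (ii) the differentials $Df^a_0 : F_0^a \to F_0^c$ and $Df^b_0 : F_0^b \to F_0^c$ satisfy $$Df^a_0\big(V[1/t]^a\big) + Df^b_0\big(W[1/t]^b\big) = F_0^c.$$ Then there is a real number $\epsilon>0$ such that for every $y \in F_0^c$ with $|y| \le \epsilon$ there exist $v \in V^a$ and $w \in W^b$ with $(v,w) \in \Omega$ and $f(v,w) = y$.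
   Context: $t$-adically complete means $V \to \varprojlim_m V/t^{m+1}V$ is an isomorphism. On $F_0^c$ one uses the max norm $|y| = \max_i |y_i|$. *)

(* Defs.v *)
From HB Require Import structures.
From mathcomp Require Import all_boot all_order all_algebra.
From mathcomp Require Import reals.
Set Implicit Arguments. Unset Strict Implicit. Unset Printing Implicit Defensive.
Import Order.TTheory GRing.Theory Num.Theory.
Local Open Scope ring_scope.

Section Defs.
Variables (R : realType) (F : fieldType).

Definition is_subring (S : F -> Prop) : Prop :=
  [/\ S 0, S 1, (forall x, S x -> S (- x)),
      (forall x y, S x -> S y -> S (x + y)) &
      (forall x y, S x -> S y -> S (x * y))].

Definition is_subfield (S : F -> Prop) : Prop :=
  is_subring S /\ (forall x, S x -> x != 0 -> S x^-1).

Definition unit_of (S : F -> Prop) (u : F) : Prop := [/\ S u, u != 0 & S u^-1].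

Definition is_dvr_unif (S : F -> Prop) (t : F) : Prop :=
  [/\ is_subring S, S t, t != 0, ~ S t^-1 &
      forall x, S x -> x != 0 -> exists n : nat, exists u, unit_of S u /\ x = t ^+ n * u].

Definition is_submodule (T M : F -> Prop) : Prop :=
  [/\ M 0, (forall x y, M x -> M y -> M (x + y)) &
      (forall r x, T r -> M x -> M (r * x))].

(* t-adic completeness: M -> lim_m M / t^(m+1) M is bijective *)
Definition tadic_complete (M : F -> Prop) (t : F) : Prop :=
  (forall x, M x -> (forall m : nat, exists y, M y /\ x = t ^+ m.+1 * y) -> x = 0) /\
  (forall xs : nat -> F, (forall m, M (xs m)) ->
     (forall m, exists y, M y /\ xs m.+1 - xs m = t ^+ m.+1 * y) ->
     exists x, M x /\ forall m, exists y, M y /\ x - xs m = t ^+ m.+1 * y).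

Definition invert_t (M : F -> Prop) (t : F) (x : F) : Prop :=
  exists n : nat, exists v, M v /\ x = t ^- n * v.

Variable absv : F -> R.

Definition vnorm n (y : 'rV[F]_n) : R := \big[Num.max/0]_(i < n) absv (y ord0 i).

Definition has_sum (I : eqType) c (u : I -> 'rV[F]_c) (l : 'rV[F]_c) : Prop :=
  forall eps : R, 0 < eps -> exists S : seq I, forall S' : seq I,
    uniq S' -> {subset S <= S'} -> vnorm (\sum_(k <- S') u k - l) <= eps.

Definition monomial n (z : 'rV[F]_n) (k : {ffun 'I_n -> nat}) : F :=
  \prod_(i < n) z ord0 i ^+ k i.

Definition analytic_on n c (D : 'rV[F]_n -> Prop) (g : 'rV[F]_n -> 'rV[F]_c) : Prop :=
  forall p, D p -> exists r : R, 0 < r /\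
    exists coef : {ffun 'I_n -> nat} -> 'rV[F]_c,
      forall z, vnorm (z - p) < r ->
        D z /\ has_sum (fun k => monomial (z - p) k *: coef k) (g z).

Definition is_open n (D : 'rV[F]_n -> Prop) : Prop :=
  forall p, D p -> exists r : R, 0 < r /\ forall z, vnorm (z - p) < r -> D z.

Definition is_diff0 m c (D : 'rV[F]_m -> Prop) (g : 'rV[F]_m -> 'rV[F]_c)
  (A : 'M[F]_(m, c)) : Prop :=
  forall eps : R, 0 < eps -> exists delta : R, 0 < delta /\
    forall x, vnorm x < delta ->
      D x /\ vnorm (g x - g 0 - x *m A) <= eps * vnorm x.

End Defs.

(* Main.v *)
Require Import Defs.
From HB Require Import structures.
From mathcomp Require Import all_boot all_order all_algebra.
From mathcomp Require Import reals.
From Stdlib Require Import ClassicalEpsilon.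
From mathcomp Require Import lra ring zify.
Ltac rowring := apply/rowP => ?; rewrite !mxE; ring.
Import Order.TTheory GRing.Theory Num.Theory.
Local Open Scope ring_scope.
Section Val.
Variables (R : realType) (F0 : fieldType) (absv : F0 -> R) (alpha : R) (t : F0)
  (T R0 F1 F2 V W : F0 -> Prop).
Hypotheses (hR0 : is_dvr_unif R0 t)
  (hR0frac : forall x : F0, x != 0 -> exists n : int, exists u, unit_of R0 u /\ x = t ^ n * u)
  (hR0c : tadic_complete R0 t)
  (halpha : 1 < alpha)
  (habs0 : absv 0 = 0)
  (habs : forall (n : int) (u : F0), unit_of R0 u -> absv (t ^ n * u) = alpha ^ (- n))
  (hT : is_dvr_unif T t) (hTc : tadic_complete T t)
  (hTR0 : forall x, T x -> R0 x)
  (hVsub : forall x, V x -> F1 x /\ R0 x) (hWsub : forall x, W x -> F2 x /\ R0 x)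
  (hVmod : is_submodule T V) (hWmod : is_submodule T W)
  (hVc : tadic_complete V t) (hWc : tadic_complete W t)
  (hVt : forall x, (V x /\ exists r, R0 r /\ x = t * r) <-> exists v, V v /\ x = t * v)
  (hWt : forall x, (W x /\ exists r, R0 r /\ x = t * r) <-> exists w, W w /\ x = t * w).

Lemma leT (x y z : R) : x <= y -> y <= z -> x <= z.
Proof. exact: le_trans. Qed.
Arguments leT {x y z}.

Definition pw (m : nat) : R := (alpha ^+ m)^-1.

Lemma alpha_gt0 : 0 < alpha.
Proof. exact: lt_trans ltr01 halpha. Qed.

Lemma alpha_unit : alpha \is a GRing.unit.
Proof. by rewrite unitfE; apply/lt0r_neq0/alpha_gt0. Qed.

Lemma pw_gt0 m : 0 < pw m.
Proof. by rewrite /pw invr_gt0 exprn_gt0 // alpha_gt0. Qed.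

Lemma pw_ge0 m : 0 <= pw m.
Proof. exact/ltW/pw_gt0. Qed.

Lemma pw0 : pw 0 = 1.
Proof. by rewrite /pw expr0 invr1. Qed.

Lemma pwD m n : pw (m + n) = pw m * pw n.
Proof. by rewrite /pw exprD invfM. Qed.

Lemma pw_le m n : (m <= n)%N -> pw n <= pw m.
Proof.
move=> mn; rewrite /pw lef_pV2 ?posrE ?exprn_gt0 ?alpha_gt0 //.
by rewrite ler_eXn2l // ltW.
Qed.

Lemma pw_lt m n : (m < n)%N -> pw n < pw m.
Proof.
move=> mn; rewrite /pw ltf_pV2 ?posrE ?exprn_gt0 ?alpha_gt0 //.
by rewrite ltr_eXn2l.
Qed.

Lemma pw_le1 m : pw m <= 1.
Proof. by rewrite -pw0 pw_le. Qed.

Lemma alpha_bern m : 1 + m%:R * (alpha - 1) <= alpha ^+ m.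
Proof.
elim: m => [|m IH]; first by rewrite mul0r addr0 expr0.
rewrite exprS.
have h1 : 0 <= alpha - 1 by rewrite subr_ge0 ltW.
apply: (le_trans _ (ler_wpM2l (ltW alpha_gt0) IH)).
have hm : 0 <= m%:R :> R by [].
have h2 : m%:R * (alpha - 1) <= alpha * (m%:R * (alpha - 1)).
  rewrite -[X in X <= _]mul1r ler_wpM2r //; first exact: mulr_ge0.
  exact: ltW.
rewrite -natr1; lra.
Qed.

Lemma pw_small (e : R) : 0 < e -> exists m, pw m < e.
Proof.
move=> e0.
have h1 : 0 < alpha - 1 by rewrite subr_gt0.
set x := (e * (alpha - 1))^-1.
have x0 : 0 <= x by rewrite /x invr_ge0 ltW // mulr_gt0.
exists (Num.Def.archi_bound x).
have hb := archi_boundP x0.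
set m := Num.Def.archi_bound x in hb *.
have key : e^-1 < alpha ^+ m.
  apply: (lt_le_trans _ (alpha_bern m)).
  have : x * (alpha - 1) < m%:R * (alpha - 1) by rewrite ltr_pM2r.
  rewrite /x invfM mulrVK ?unitfE ?lt0r_neq0 // => h.
  apply: (lt_trans h); rewrite ltrDr; exact: ltr01.
rewrite /pw -[e]invrK ltf_pV2 ?posrE ?exprn_gt0 ?alpha_gt0 ?invr_gt0 //.
Qed.

Lemma t_neq0 : t != 0.
Proof. by case: hR0. Qed.

Lemma R0sub : is_subring R0.
Proof. by case: hR0. Qed.

Lemma R0_0 : R0 0. Proof. by case: R0sub. Qed.
Lemma R0_1 : R0 1. Proof. by case: R0sub. Qed.
Lemma R0_N x : R0 x -> R0 (- x). Proof. by case: R0sub => _ _ h _ _; apply: h. Qed.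
Lemma R0_D x y : R0 x -> R0 y -> R0 (x + y). Proof. by case: R0sub => _ _ _ h _; apply: h. Qed.
Lemma R0_M x y : R0 x -> R0 y -> R0 (x * y). Proof. by case: R0sub => _ _ _ _ h; apply: h. Qed.
Lemma R0_t : R0 t. Proof. by case: hR0. Qed.
Lemma R0_X n : R0 (t ^+ n).
Proof. elim: n => [|n IH]; first by rewrite expr0; exact: R0_1. by rewrite exprS; apply: R0_M => //; exact: R0_t. Qed.

Lemma unit_ofM u v : unit_of R0 u -> unit_of R0 v -> unit_of R0 (u * v).
Proof.
case=> u1 u2 u3 [v1 v2 v3]; split; first exact: R0_M.
  by rewrite mulf_neq0.
by rewrite invfM; apply: R0_M.
Qed.

Lemma unit_of1 : unit_of R0 1.
Proof. by split; [exact: R0_1 | exact: oner_neq0 | rewrite invr1; exact: R0_1]. Qed.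

Lemma unit_ofN u : unit_of R0 u -> unit_of R0 (- u).
Proof. by case=> u1 u2 u3; split; rewrite ?invrN ?oppr_eq0 //; apply: R0_N. Qed.

Lemma absv_nat n u : unit_of R0 u -> absv (t ^+ n * u) = pw n.
Proof. by move=> hu; rewrite exprnP habs // -exprnN. Qed.

Lemma absv_ge0 x : 0 <= absv x.
Proof.
have [->|x0] := eqVneq x 0; first by rewrite habs0.
have [n [u [hu ->]]] := hR0frac _ x0.
by rewrite habs // ltW // exprz_gt0 // alpha_gt0.
Qed.

Lemma absv_gt0 x : x != 0 -> 0 < absv x.
Proof.
move=> x0; have [n [u [hu ->]]] := hR0frac _ x0.
by rewrite habs // exprz_gt0 // alpha_gt0.
Qed.

Lemma absv_eq0 x : absv x = 0 -> x = 0.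
Proof.
move=> h; apply/eqP; apply: contraLR isT => x0.
by have := absv_gt0 _ x0; rewrite h ltxx.
Qed.

Lemma t_unit : t \is a GRing.unit.
Proof. by rewrite unitfE t_neq0. Qed.

Lemma absvM x y : absv (x * y) = absv x * absv y.
Proof.
have [->|x0] := eqVneq x 0; first by rewrite mul0r habs0 mul0r.
have [->|y0] := eqVneq y 0; first by rewrite mulr0 habs0 mulr0.
have [n [u [hu ->]]] := hR0frac _ x0.
have [m [v [hv ->]]] := hR0frac _ y0.
have -> : t ^ n * u * (t ^ m * v) = t ^ (n + m) * (u * v).
  by rewrite exprzDr ?t_unit // mulrACA.
rewrite (habs _ _ (unit_ofM _ _ hu hv)) !habs // opprD exprzDr //; exact: alpha_unit.
Qed.

Lemma absvN x : absv (- x) = absv x.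
Proof.
have [->|x0] := eqVneq x 0; first by rewrite oppr0.
have [n [u [hu ->]]] := hR0frac _ x0.
by rewrite -mulrN (habs _ _ (unit_ofN _ hu)) habs.
Qed.

Lemma absv1 : absv 1 = 1.
Proof. by have := absv_nat 0 1 unit_of1; rewrite expr0 mulr1 pw0. Qed.

Lemma absvX n : absv (t ^+ n) = pw n.
Proof. by have := absv_nat n 1 unit_of1; rewrite mulr1. Qed.

Lemma absvV x : absv (x^-1) = (absv x)^-1.
Proof.
have [->|x0] := eqVneq x 0; first by rewrite invr0 habs0 invr0.
have h : absv x * absv x^-1 = 1 by rewrite -absvM divff // absv1.
have hx : absv x != 0 by apply/lt0r_neq0/absv_gt0.
by apply: (mulfI hx); rewrite h divff.
Qed.

Lemma R0_le1 x : R0 x -> absv x <= 1.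
Proof.
have [->|x0] := eqVneq x 0; first by rewrite habs0 ler01.
case: hR0 => _ _ _ _ h /h /(_ x0) [n [u [hu ->]]].
by rewrite (absv_nat _ _ hu) pw_le1.
Qed.

Lemma le1_R0 x : absv x <= 1 -> R0 x.
Proof.
have [->|x0] := eqVneq x 0; first by move=> _; exact: R0_0.
have [n [u [hu ->]]] := hR0frac _ x0.
rewrite (habs _ _ hu); case: n => [k|k] h.
  by rewrite -exprnP; apply: R0_M; [exact: R0_X| case: hu].
exfalso; move: h; rewrite NegzE opprK -exprnP.
by rewrite leNgt exprn_egt1.
Qed.

Lemma absvD x y (B : R) : absv x <= B -> absv y <= B -> absv (x + y) <= B.
Proof.
wlog le: x y / absv y <= absv x.
  move=> Hw hx hy; have [h|h] := leP (absv y) (absv x); first exact: Hw.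
  by rewrite addrC; apply: Hw => //; apply: ltW.
move=> hx _.
have [x0|x0] := eqVneq x 0.
  by move: hx le; rewrite x0 add0r habs0 => hx hy; apply: le_trans hy hx.
have -> : x + y = x * (1 + y / x) by rewrite mulrDr mulr1 mulrC mulfVK.
rewrite absvM; apply: le_trans hx; rewrite -[X in _ <= X]mulr1.
rewrite ler_wpM2l ?absv_ge0 //; apply: R0_le1; apply: R0_D; first exact: R0_1.
apply: le1_R0; rewrite absvM absvV ler_pdivrMr ?mul1r //.
exact: absv_gt0 _ x0.
Qed.

Lemma absvB x y (B : R) : absv x <= B -> absv y <= B -> absv (x - y) <= B.
Proof. by move=> hx hy; apply: absvD; rewrite ?absvN. Qed.

Lemma absv_divt x m : absv x <= pw m -> exists r, R0 r /\ x = t ^+ m * r.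
Proof.
move=> h; exists (x / t ^+ m); split; last first.
  by rewrite mulrC divfK // expf_neq0 // t_neq0.
apply: le1_R0; rewrite absvM absvV absvX ler_pdivrMr ?pw_gt0 // mul1r //.
Qed.

Lemma absv_sum (I : Type) (s : seq I) (P : pred I) (F : I -> F0) (B : R) :
  0 <= B -> (forall i, P i -> absv (F i) <= B) -> absv (\sum_(i <- s | P i) F i) <= B.
Proof.
move=> B0 h; apply: (big_ind (fun x => absv x <= B)) => //; first by rewrite habs0.
by move=> ???; apply: absvD.
Qed.

Local Notation vn := (vnorm absv).

Lemma vnorm_ge0 n (y : 'rV[F0]_n) : 0 <= vn y.
Proof.
rewrite /vnorm; apply: (big_ind (fun x => 0 <= x)) => // [a b ha hb|i _].
  by rewrite le_max ha.
exact: absv_ge0.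
Qed.

Lemma le_vnorm n (y : 'rV[F0]_n) i : absv (y 0 i) <= vn y.
Proof. by rewrite /vnorm (bigD1 i) //= le_max lexx. Qed.

Lemma vnorm_le n (y : 'rV[F0]_n) (B : R) :
  0 <= B -> (forall i, absv (y 0 i) <= B) -> vn y <= B.
Proof.
move=> B0 h; rewrite /vnorm; apply: (big_ind (fun x => x <= B)) => //.
by move=> a b ha hb; rewrite ge_max ha.
Qed.

Lemma vnorm0 n : vn (0 : 'rV[F0]_n) = 0.
Proof.
apply/le_anti; rewrite vnorm_ge0 andbT; apply: vnorm_le => // i.
by rewrite mxE habs0.
Qed.

Lemma vnormD_le n (x y : 'rV[F0]_n) (B : R) : vn x <= B -> vn y <= B -> vn (x + y) <= B.
Proof.
move=> hx hy; apply: vnorm_le; first exact: leT (vnorm_ge0 _ _) hx.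
move=> i; rewrite mxE; apply: absvD.
  exact: leT (le_vnorm _ _ _) hx.
exact: leT (le_vnorm _ _ _) hy.
Qed.

Lemma vnormN n (x : 'rV[F0]_n) : vn (- x) = vn x.
Proof.
apply/le_anti/andP; split; apply: vnorm_le; rewrite ?vnorm_ge0 // => i.
  by rewrite mxE absvN le_vnorm.
by have := le_vnorm _ (- x) i; rewrite mxE absvN.
Qed.

Lemma vnormB_le n (x y : 'rV[F0]_n) (B : R) : vn x <= B -> vn y <= B -> vn (x - y) <= B.
Proof. by move=> hx hy; apply: vnormD_le; rewrite ?vnormN. Qed.

Lemma vnormBC n (x y : 'rV[F0]_n) : vn (x - y) = vn (y - x).
Proof. by rewrite -vnormN opprB. Qed.

Lemma vnormZ n (s : F0) (y : 'rV[F0]_n) : vn (s *: y) = absv s * vn y.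
Proof.
have hle : forall s (y : 'rV[F0]_n), vn (s *: y) <= absv s * vn y.
  move=> s' y'; apply: vnorm_le; first by rewrite mulr_ge0 ?absv_ge0 ?vnorm_ge0.
  move=> i; rewrite mxE absvM.
  by rewrite ler_wpM2l ?absv_ge0 ?le_vnorm.
apply/le_anti; rewrite hle /=.
have [->|s0] := eqVneq s 0; first by rewrite habs0 mul0r vnorm_ge0.
have := hle s^-1 (s *: y); rewrite scalerA mulVf // scale1r.
rewrite absvV => h.
have sp := absv_gt0 _ s0.
by rewrite mulrC -ler_pdivlMr // mulrC.
Qed.

Lemma vnorm_eq0 n (y : 'rV[F0]_n) : vn y <= 0 -> y = 0.
Proof.
move=> h; apply/rowP => i; rewrite mxE.
apply: absv_eq0.
by apply/le_anti; rewrite absv_ge0 andbT (leT (le_vnorm _ _ _)).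
Qed.

Lemma vnorm_sum n (I : Type) (s : seq I) (P : pred I) (F : I -> 'rV[F0]_n) (B : R) :
  0 <= B -> (forall i, P i -> vn (F i) <= B) -> vn (\sum_(i <- s | P i) F i) <= B.
Proof.
move=> B0 h; apply: (big_ind (fun x => vn x <= B)) => //; first by rewrite vnorm0.
by move=> ???; apply: vnormD_le.
Qed.

Lemma vnorm_mulmx m n (A : 'M[F0]_(m, n)) :
  exists C, 0 <= C /\ forall x : 'rV[F0]_m, vn (x *m A) <= C * vn x.
Proof.
exists (vn (mxvec A)); split; first exact: vnorm_ge0.
move=> x; apply: vnorm_le; first by rewrite mulr_ge0 ?vnorm_ge0.
move=> j; rewrite mxE; apply: absv_sum.
  by rewrite mulr_ge0 ?vnorm_ge0.
move=> i _; rewrite absvM mulrC.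
apply: ler_pM; rewrite ?absv_ge0 ?le_vnorm //.
by rewrite -(mxvecE A) le_vnorm.
Qed.

Lemma vnorm_lsub m n (z : 'rV[F0]_(m + n)) : vn (lsubmx z) <= vn z.
Proof. by apply: vnorm_le; rewrite ?vnorm_ge0 // => i; rewrite mxE le_vnorm. Qed.

Lemma vnorm_rsub m n (z : 'rV[F0]_(m + n)) : vn (rsubmx z) <= vn z.
Proof. by apply: vnorm_le; rewrite ?vnorm_ge0 // => i; rewrite mxE le_vnorm. Qed.

Lemma vnorm_row_mx m n (x : 'rV[F0]_m) (y : 'rV[F0]_n) (B : R) :
  vn x <= B -> vn y <= B -> vn (row_mx x y) <= B.
Proof.
move=> hx hy; apply: vnorm_le; first exact: leT (vnorm_ge0 _ _) hx.
move=> i; rewrite mxE; case: splitP => j _.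
  exact: leT (le_vnorm _ _ _) hx.
exact: leT (le_vnorm _ _ _) hy.
Qed.

Lemma vnorm_divt n (y : 'rV[F0]_n) m :
  vn y <= pw m -> exists r : 'rV[F0]_n, (forall i, R0 (r 0 i)) /\ y = t ^+ m *: r.
Proof.
move=> h; exists ((t ^+ m)^-1 *: y); split; last first.
  by rewrite scalerA divff ?scale1r // expf_neq0 // t_neq0.
move=> i; apply: le1_R0; rewrite mxE.
rewrite absvM absvV.
rewrite absvX /pw invrK.
rewrite -ler_pdivlMl ?exprn_gt0 ?alpha_gt0 // mulr1.
exact: leT (le_vnorm _ _ _) h.
Qed.

Lemma vnorm_R0 n (r : 'rV[F0]_n) : (forall i, R0 (r 0 i)) -> vn r <= 1.
Proof. by move=> h; apply: vnorm_le => // i; apply: R0_le1. Qed.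

Lemma vnorm_tZ n m (r : 'rV[F0]_n) : vn (t ^+ m *: r) = pw m * vn r.
Proof. by rewrite vnormZ absvX. Qed.


Definition goodmod (M : F0 -> Prop) : Prop :=
  [/\ is_submodule T M, tadic_complete M t, (forall x, M x -> R0 x) &
      (forall x, (M x /\ exists r, R0 r /\ x = t * r) -> exists v, M v /\ x = t * v)].

Lemma T_sub : is_subring T. Proof. by case: hT. Qed.
Lemma T_t : T t. Proof. by case: hT. Qed.
Lemma T_X n : T (t ^+ n).
Proof.
case: T_sub => h0 h1 hN hD hM.
elim: n => [|n IH]; first by rewrite expr0. by rewrite exprS; apply: hM => //; exact: T_t.
Qed.
Lemma T_N1 : T (-1).
Proof. by case: T_sub => h0 h1 hN hD hM; apply: hN. Qed.

Lemma goodV : goodmod V.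
Proof. split => //; first by move=> x /hVsub []. by move=> x /hVt. Qed.
Lemma goodW : goodmod W.
Proof. split => //; first by move=> x /hWsub []. by move=> x /hWt. Qed.
Lemma goodR0 : goodmod R0.
Proof.
split.
- split; first exact: R0_0.
    exact: R0_D.
  by move=> r x /hTR0 hr hx; apply: R0_M.
- exact: hR0c.
- by [].
- by move=> x [_ [r [hr ->]]]; exists r.
Qed.

Section Good.
Variable M : F0 -> Prop.
Hypothesis hM : goodmod M.

Lemma gm0 : M 0. Proof. by case: hM => [[h0 hD hT']] _ _ _. Qed.
Lemma gmD x y : M x -> M y -> M (x + y). Proof. by case: hM => [[h0 hD hT']] _ _ _; apply: hD. Qed.
Lemma gmT r x : T r -> M x -> M (r * x). Proof. by case: hM => [[h0 hD hT']] _ _ _; apply: hT'. Qed.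
Lemma gmN x : M x -> M (- x).
Proof. by move=> hx; rewrite -mulN1r; apply: gmT => //; exact: T_N1. Qed.
Lemma gmB x y : M x -> M y -> M (x - y).
Proof. by move=> hx hy; apply: gmD => //; apply: gmN. Qed.
Lemma gmX n x : M x -> M (t ^+ n * x).
Proof. by move=> hx; apply: gmT => //; apply: T_X. Qed.
Lemma gmR0 x : M x -> R0 x. Proof. by case: hM => _ _ h _; apply: h. Qed.
Lemma gm_le1 x : M x -> absv x <= 1. Proof. by move/gmR0; apply: R0_le1. Qed.

Lemma gm_div m x : M x -> absv x <= pw m -> exists v, M v /\ x = t ^+ m * v.
Proof.
elim: m x => [|m IH] x hx hle; first by exists x; rewrite expr0 mul1r.
have [r [hr ex]] := absv_divt _ _ hle.
case: hM => _ _ _ hsat.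
have [v [hv ev]] : exists v, M v /\ x = t * v.
  apply: hsat; split => //; exists (t ^+ m * r); split; first by apply: R0_M => //; exact: R0_X.
  by rewrite ex exprS mulrA.
have at1 : absv t = pw 1 by rewrite -(absvX 1) expr1.
have pS : pw m.+1 = pw 1 * pw m by rewrite -pwD.
have hv2 : absv v <= pw m.
  by move: hle; rewrite ev absvM at1 pS ler_pM2l ?pw_gt0.
have [v' [hv' ev']] := IH v hv hv2.
by exists v'; rewrite ex in ev *; rewrite ev ev' exprS mulrA.
Qed.

Lemma gm_lim (xs : nat -> F0) : (forall k, M (xs k)) ->
  (forall k, absv (xs k.+1 - xs k) <= pw k.+1) ->
  exists x, M x /\ forall k, absv (x - xs k) <= pw k.+1.
Proof.
move=> hxs hc.
case: hM => _ [_ hlim] _ _.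
have [x [hx hk]] := hlim xs hxs (fun k => gm_div _ _ (gmB _ _ (hxs k.+1) (hxs k)) (hc k)).
exists x; split => // k; have [y [hy ->]] := hk k.
by rewrite absvM absvX -[X in _ <= X]mulr1 ler_wpM2l ?pw_ge0 // gm_le1.
Qed.


End Good.

Section RowGood.
Variables (n : nat) (P : 'I_n -> F0 -> Prop).
Hypothesis hP : forall i, goodmod (P i).

Definition rg (z : 'rV[F0]_n) := forall i, P i (z 0 i).

Lemma rg0 : rg 0. Proof. by move=> i; rewrite mxE; apply: gm0. Qed.
Lemma rgD z z' : rg z -> rg z' -> rg (z + z').
Proof. by move=> h h' i; rewrite mxE; apply: gmD. Qed.
Lemma rgB z z' : rg z -> rg z' -> rg (z - z').
Proof. by move=> h h' i; rewrite !mxE; apply: gmB. Qed.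
Lemma rgX m z : rg z -> rg (t ^+ m *: z).
Proof. by move=> h i; rewrite mxE; apply: gmX. Qed.
Lemma rg_le1 z : rg z -> vnorm absv z <= 1.
Proof. by move=> h; apply: vnorm_le => // i; apply: (gm_le1 _ (hP i)). Qed.

Lemma rg_div m z : rg z -> vnorm absv z <= pw m -> exists z', rg z' /\ z = t ^+ m *: z'.
Proof.
move=> h hle.
have : forall i, exists v, P i v /\ z 0 i = t ^+ m * v.
  by move=> i; apply: gm_div => //; exact: leT (le_vnorm _ _ _) hle.
case/fin_all_exists => f hf.
exists (\row_i f i); split; first by move=> i; rewrite mxE; case: (hf i).
by apply/rowP => i; rewrite !mxE; case: (hf i).
Qed.

Lemma rg_lim (zs : nat -> 'rV[F0]_n) : (forall k, rg (zs k)) ->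
  (forall k, vnorm absv (zs k.+1 - zs k) <= pw k.+1) ->
  exists z, rg z /\ forall k, vnorm absv (z - zs k) <= pw k.+1.
Proof.
move=> hz hc.
have : forall i, exists x, P i x /\ forall k, absv (x - zs k 0 i) <= pw k.+1.
  move=> i; apply: gm_lim => [//|k|k]; first exact: hz.
  have := le_vnorm _ (zs k.+1 - zs k) i; rewrite !mxE => h; exact: leT h (hc k).
case/fin_all_exists => f hf.
exists (\row_i f i); split; first by move=> i; rewrite mxE; case: (hf i).
move=> k; apply: vnorm_le; first exact: pw_ge0.
by move=> i; rewrite !mxE; case: (hf i) => _ ->.
Qed.

End RowGood.

Lemma hs_sub (I : eqType) c (u v : I -> 'rV[F0]_c) l1 l2 :
  has_sum absv u l1 -> has_sum absv v l2 -> has_sum absv (fun k => u k - v k) (l1 - l2).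
Proof.
move=> hu hv e e0.
have [S1 h1] := hu e e0; have [S2 h2] := hv e e0.
exists (S1 ++ S2) => S' uS sS.
have s1 : {subset S1 <= S'} by move=> x hx; apply: sS; rewrite mem_cat hx.
have s2 : {subset S2 <= S'} by move=> x hx; apply: sS; rewrite mem_cat hx orbT.
have := h1 S' uS s1; have := h2 S' uS s2.
rewrite sumrB => a1 a2.
have -> : \sum_(k <- S') u k - \sum_(k <- S') v k - (l1 - l2) =
          (\sum_(k <- S') u k - l1) - (\sum_(k <- S') v k - l2) by rowring.
exact: vnormB_le.
Qed.

Lemma hs_term_bound (I : eqType) c (u : I -> 'rV[F0]_c) l :
  has_sum absv u l -> exists M, 0 <= M /\ forall k, vnorm absv (u k) <= M.
Proof.
move=> hu; have [S hS] := hu 1 ltr01.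
set S1 := undup S.
exists (1 + \sum_(k <- S1) vnorm absv (u k)); split.
  by rewrite addr_ge0 // sumr_ge0 // => i _; apply: vnorm_ge0.
move=> k; case: (boolP (k \in S)) => kS.
  have kS1 : k \in S1 by rewrite mem_undup.
  rewrite (bigD1_seq k kS1 (undup_uniq S)) /= addrCA lerDl addr_ge0 //.
  by rewrite sumr_ge0 // => i _; apply: vnorm_ge0.
have hA := hS S1 (undup_uniq S) (fun x hx => etrans (mem_undup S x) hx).
have hB := hS (k :: S1).
have : vnorm absv (\sum_(i <- k :: S1) u i - l) <= 1.
  apply: hB; first by rewrite /= mem_undup kS undup_uniq.
  by move=> x hx; rewrite inE mem_undup hx orbT.
rewrite big_cons => hB'.
have -> : u k = (u k + \sum_(i <- S1) u i - l) - (\sum_(i <- S1) u i - l) by rowring.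
apply: (leT (vnormB_le _ _ _ _ hB' hA)).
by rewrite lerDl sumr_ge0 // => i _; apply: vnorm_ge0.
Qed.

Lemma hs_le (I : eqType) c (u : I -> 'rV[F0]_c) l (X : 'rV[F0]_c) (B : R) (S0 : seq I) :
  has_sum absv u l -> 0 <= B ->
  (forall S', uniq S' -> {subset S0 <= S'} -> vnorm absv (\sum_(k <- S') u k - X) <= B) ->
  vnorm absv (l - X) <= B.
Proof.
move=> hu B0 hfin.
rewrite leNgt; apply/negP => hlt.
set x := vnorm absv (l - X) in hlt.
have x0 : 0 < x by apply: le_lt_trans hlt.
have [S hS] := hu (x / 2) (divr_gt0 x0 (ltr0Sn _ 1)).
set S' := undup (S ++ S0).
have uS : uniq S' by apply: undup_uniq.
have s1 : {subset S <= S'} by move=> y hy; rewrite mem_undup mem_cat hy.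
have s2 : {subset S0 <= S'} by move=> y hy; rewrite mem_undup mem_cat hy orbT.
have h1 := hS S' uS s1.
have h2 := hfin S' uS s2.
set Bm := Num.max B (x / 2).
have : x <= Bm.
  rewrite /x.
  have -> : l - X = (\sum_(k <- S') u k - X) - (\sum_(k <- S') u k - l) by rowring.
  apply: vnormB_le; first by rewrite (le_trans h2) // le_max lexx.
  by rewrite (le_trans h1) // le_max lexx orbT.
rewrite /Bm le_max => /orP [h|h].
  by move: hlt; rewrite ltNge h.
lra.
Qed.

Lemma absvXn x k : absv (x ^+ k) = absv x ^+ k.
Proof. elim: k => [|k IH]; first by rewrite !expr0 absv1. by rewrite !exprS absvM IH. Qed.

Lemma pow_diff (x y : F0) (d de : R) k : 0 < de -> absv x <= de -> absv y <= de ->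
  absv (x - y) <= d -> absv (x ^+ k - y ^+ k) <= d * de ^+ k / de.
Proof.
move=> de0 hx hy hd.
have d0 : 0 <= d by apply: leT hd; apply: absv_ge0.
elim: k => [|k IH]; first by rewrite !expr0 subrr habs0 mulr1 divr_ge0 // ltW.
have -> : x ^+ k.+1 - y ^+ k.+1 = x * (x ^+ k - y ^+ k) + (x - y) * y ^+ k.
  by rewrite !exprS; ring.
have -> : d * de ^+ k.+1 / de = d * de ^+ k.
  by rewrite exprS; field; exact: lt0r_neq0.
apply: absvD; rewrite absvM.
  rewrite mulrC -[d * _](mulfK (lt0r_neq0 de0)) mulrAC.
  by apply: ler_pM => //; apply: absv_ge0.
apply: ler_pM; rewrite ?absv_ge0 // absvXn.
by apply: lerXn2r; rewrite ?nnegrE ?absv_ge0 ?(ltW de0).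
Qed.

Lemma prod_diff (I : Type) (s : seq I) (X Y : I -> F0) (kk : I -> nat) (d de : R) :
  0 < de -> 0 <= d ->
  (forall i, absv (X i) <= de ^+ kk i) -> (forall i, absv (Y i) <= de ^+ kk i) ->
  (forall i, absv (X i - Y i) <= d * de ^+ kk i / de) ->
  absv (\prod_(i <- s) X i - \prod_(i <- s) Y i) <= d * de ^+ (\sum_(i <- s) kk i) / de
  /\ absv (\prod_(i <- s) Y i) <= de ^+ (\sum_(i <- s) kk i).
Proof.
move=> de0 d0 hX hY hXY.
elim: s => [|i s [IH1 IH2]].
  rewrite !big_nil subrr habs0 absv1 expr0 lexx; split => //.
  by rewrite mulr1 mulr_ge0 // invr_ge0 ltW.
rewrite !big_cons; split; last first.
  by rewrite absvM exprD ler_pM ?absv_ge0.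
have -> : X i * \prod_(j <- s) X j - Y i * \prod_(j <- s) Y j =
  X i * (\prod_(j <- s) X j - \prod_(j <- s) Y j) + (X i - Y i) * \prod_(j <- s) Y j.
  by ring.
set S := (\sum_(j <- s) kk j)%N.
apply: absvD; rewrite absvM exprD.
  have -> : d * (de ^+ kk i * de ^+ S) / de = de ^+ kk i * (d * de ^+ S / de) by ring.
  by apply: ler_pM; rewrite ?absv_ge0.
have -> : d * (de ^+ kk i * de ^+ S) / de = (d * de ^+ kk i / de) * de ^+ S by ring.
by apply: ler_pM; rewrite ?absv_ge0.
Qed.

Definition deg {n} (k : {ffun 'I_n -> nat}) : nat := \sum_(i < n) k i.

Lemma mono_diff n (p q : 'rV[F0]_n) k (de : R) : 0 < de ->
  vnorm absv p <= de -> vnorm absv q <= de ->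
  absv (monomial p k - monomial q k) <= vnorm absv (p - q) * de ^+ deg k / de.
Proof.
move=> de0 hp hq.
have [] := prod_diff _ (index_enum 'I_n) (fun i => p ord0 i ^+ k i) (fun i => q ord0 i ^+ k i)
  (fun i => k i) _ _ de0 (vnorm_ge0 _ (p - q)).
- move=> i; rewrite absvXn; apply: lerXn2r; rewrite ?nnegrE ?absv_ge0 ?(ltW de0) //.
  exact: leT (le_vnorm _ _ _) hp.
- move=> i; rewrite absvXn; apply: lerXn2r; rewrite ?nnegrE ?absv_ge0 ?(ltW de0) //.
  exact: leT (le_vnorm _ _ _) hq.
- move=> i; apply: pow_diff => //.
  + exact: leT (le_vnorm _ _ _) hp.
  + exact: leT (le_vnorm _ _ _) hq.
  + by have := le_vnorm _ (p - q) i; rewrite !mxE.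
by move=> h _; apply: h.
Qed.

Lemma mono_abs n (z : 'rV[F0]_n) k (rho : R) : (forall i, absv (z ord0 i) = rho) ->
  absv (monomial z k) = rho ^+ deg k.
Proof.
move=> hz; rewrite /monomial /deg.
elim: (index_enum 'I_n) => [|i s IH]; first by rewrite !big_nil absv1 expr0.
by rewrite !big_cons absvM absvXn hz IH exprD.
Qed.

Definition eb {n} (i : 'I_n) : {ffun 'I_n -> nat} := [ffun j => nat_of_bool (j == i)].

Lemma mono_eb n (z : 'rV[F0]_n) i : monomial z (eb i) = z ord0 i.
Proof.
rewrite /monomial (bigD1 i) //= big1 ?mulr1; first by rewrite ffunE eqxx expr1.
by move=> j hj; rewrite ffunE (negPf hj) expr0.
Qed.

Lemma mono_deg0 n (z : 'rV[F0]_n) k : deg k = 0%N -> monomial z k = 1.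
Proof.
move=> h; rewrite /monomial big1 // => i _.
have : (k i <= deg k)%N by rewrite /deg (bigD1 i) //= leq_addr.
by rewrite h leqn0 => /eqP ->; rewrite expr0.
Qed.

Lemma deg1 n (k : {ffun 'I_n -> nat}) : deg k = 1%N -> exists i, k = eb i.
Proof.
move=> h.
have [i hi] : exists i, k i != 0%N.
  apply/existsP; apply: contraT; rewrite negb_exists => /forallP h0.
  by move: h; rewrite /deg big1 // => j _; apply/eqP; move: (h0 j); rewrite negbK.
exists i; apply/ffunP => j; rewrite ffunE.
have hs : (k i + \sum_(j0 < n | j0 != i) k j0)%N = 1%N by move: h; rewrite /deg (bigD1 i).
have hki : (k i <= 1)%N by rewrite -hs leq_addr.
have ki1 : k i = 1%N by move: hi hki; lia.
case: (eqVneq j i) => [->|ji] /=; first by rewrite ki1.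
have : (k j <= \sum_(j0 < n | j0 != i) k j0)%N by rewrite (bigD1 j) //= leq_addr.
move: hs; rewrite ki1 => hs; lia.
Qed.

Lemma real_ineq (A Cf dd M de rho e : R) d2 : 0 <= A -> 0 <= Cf -> 0 <= dd -> 0 <= M ->
  0 < de -> de <= rho -> M * de <= e * rho ^+ 2 ->
  A <= dd * de ^+ d2.+2 / de -> Cf * rho ^+ d2.+2 <= M -> A * Cf <= e * dd.
Proof.
move=> A0 C0 d0 M0 de0 der hM hA hC.
have rho0 : 0 < rho by apply: lt_le_trans der.
have e1 : dd * de ^+ d2.+2 / de = dd * de * de ^+ d2.
  by rewrite !exprS; field; apply: lt0r_neq0.
rewrite e1 in hA.
have h1 : A * Cf * rho ^+ d2.+2 <= dd * de * de ^+ d2 * M.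
  rewrite -mulrA; apply: ler_pM => //; apply: mulr_ge0 => //; apply: exprn_ge0; exact: ltW.
have h2 : de ^+ d2 <= rho ^+ d2 by apply: lerXn2r => //; rewrite nnegrE ltW // (lt_le_trans de0).
have h3 : dd * de * de ^+ d2 * M <= dd * de * rho ^+ d2 * M.
  apply: (ler_wpM2r M0); apply: ler_wpM2l h2; exact: mulr_ge0 d0 (ltW de0).
have rd0 : 0 < rho ^+ d2 by rewrite exprn_gt0.
have h4 : (A * Cf * rho ^+ 2) * rho ^+ d2 <= (dd * (M * de)) * rho ^+ d2.
  have -> : A * Cf * rho ^+ 2 * rho ^+ d2 = A * Cf * rho ^+ d2.+2 by rewrite -mulrA -exprD.
  have -> : dd * (M * de) * rho ^+ d2 = dd * de * rho ^+ d2 * M by ring.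
  exact: leT h1 h3.
rewrite ler_pM2r // in h4.
have h5 : dd * (M * de) <= dd * (e * rho ^+ 2) by apply: ler_wpM2l.
have h6 : (A * Cf) * rho ^+ 2 <= (e * dd) * rho ^+ 2.
  apply: (leT h4); apply: (leT h5); by rewrite mulrA [dd * e]mulrC.
by rewrite ler_pM2r ?exprn_gt0 in h6.
Qed.

Lemma strict_diff n c (D : 'rV[F0]_n -> Prop) (Fn : 'rV[F0]_n -> 'rV[F0]_c) :
  D 0 -> analytic_on absv D Fn ->
  exists G : 'M[F0]_(n, c), forall e : R, 0 < e -> exists j, forall p q,
    vnorm absv p <= pw j -> vnorm absv q <= pw j ->
    D p /\ vnorm absv (Fn p - Fn q - (p - q) *m G) <= e * vnorm absv (p - q).
Proof.
move=> hD0 han.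
have [r [r0 [coef hco]]] := han 0 hD0.
have [m0 hm0] := pw_small _ r0.
set rho := pw m0 in hm0.
have rho0 : 0 < rho := pw_gt0 m0.
set z0 : 'rV[F0]_n := const_mx (t ^+ m0).
have hz0 : vnorm absv (z0 - 0) < r.
  rewrite subr0; apply: le_lt_trans hm0; apply: vnorm_le; first exact: pw_ge0.
  by move=> i; rewrite mxE absvX.
have [_ hs0] := hco z0 hz0.
have [M [M0 hM]] := hs_term_bound _ _ _ _ hs0.
have hcoef : forall k, vnorm absv (coef k) * rho ^+ deg k <= M.
  move=> k; have := hM k; rewrite vnormZ subr0 (mono_abs _ _ _ rho); first by rewrite mulrC.
  by move=> i; rewrite mxE absvX.
exists (\matrix_(i, j) coef (eb i) ord0 j).
move=> e e0.
have q0 : 0 < e * rho ^+ 2 / (M + 1).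
  by rewrite divr_gt0 ?mulr_gt0 ?exprn_gt0 // ltr_wpDl.
have [j1 hj1] := pw_small _ q0.
exists (j1 + m0)%N => p q hp hq.
set de := pw (j1 + m0) in hp hq.
have de0 : 0 < de := pw_gt0 _.
have derho : de <= rho by apply: pw_le; rewrite leq_addl.
have hMde : M * de <= e * rho ^+ 2.
  have : de <= pw j1 by apply: pw_le; rewrite leq_addr.
  move=> h; have : (M + 1) * de < e * rho ^+ 2.
    by rewrite mulrC -ltr_pdivlMr ?ltr_wpDl //; apply: le_lt_trans hj1.
  move=> h2; apply: (leT _ (ltW h2)).
  by rewrite ler_wpM2r ?lerDl // ltW.
have hpr : vnorm absv (p - 0) < r by rewrite subr0; apply: le_lt_trans hm0; exact: leT hp derho.
have hqr : vnorm absv (q - 0) < r by rewrite subr0; apply: le_lt_trans hm0; exact: leT hq derho.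
have [Dp hsp] := hco p hpr; have [_ hsq] := hco q hqr.
split => //.
rewrite subr0 in hsp; rewrite subr0 in hsq.
have hsd := hs_sub _ _ _ _ _ _ hsp hsq.
set S0 := map eb (index_enum 'I_n).
apply: (hs_le _ _ _ _ _ _ S0 hsd); first by apply: mulr_ge0; [exact: ltW | exact: vnorm_ge0].
move=> S' uS sub.
have ebinj : injective (@eb n).
  move=> i i' h; have := congr1 (fun f : {ffun 'I_n -> nat} => f i) h.
  by rewrite !ffunE eqxx; case: eqP.
have uS0 : uniq S0 by rewrite map_inj_uniq // index_enum_uniq.
rewrite (bigID (fun k => k \in S0)) /=.
have hE : \sum_(k <- S' | k \in S0)
    (monomial p k *: coef k - monomial q k *: coef k)
    = (p - q) *m \matrix_(i, j) coef (eb i) ord0 j.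
  rewrite -big_filter (perm_big S0); last first.
    apply: uniq_perm; rewrite ?filter_uniq // => x.
    by rewrite mem_filter; apply/andP/idP => [[]//|hx]; split => //; apply: sub.
  rewrite big_map mulmx_sum_row; apply: eq_bigr => i _.
  rewrite !mono_eb -scalerBl; congr (_ *: _); first by rewrite !mxE.
  by apply/rowP => j; rewrite !mxE.
rewrite hE addrAC subrr add0r.
apply: vnorm_sum; first by apply: mulr_ge0; [exact: ltW | exact: vnorm_ge0].
move=> k hk.
rewrite -scalerBl vnormZ.
case hdeg: (deg k) => [|[|d2]].
- rewrite mono_deg0 // mono_deg0 // subrr habs0 mul0r.
  by apply: mulr_ge0; [exact: ltW | exact: vnorm_ge0].
- have [i ei] := deg1 _ _ hdeg.
  by move: hk; rewrite ei map_f // mem_index_enum.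
- apply: (real_ineq _ _ _ M de rho e d2) => //.
  + exact: absv_ge0.
  + exact: vnorm_ge0.
  + exact: vnorm_ge0.
  + by rewrite -hdeg; apply: mono_diff.
  + by rewrite -hdeg; apply: hcoef.
Qed.

Lemma le_pos0 (x : R) : (forall e, 0 < e -> x <= e) -> x <= 0.
Proof.
move=> h; rewrite leNgt; apply/negP => x0.
have := h (x / 2) (divr_gt0 x0 (ltr0Sn _ 1)); lra.
Qed.

Lemma vn_delta m (i : 'I_m) : vnorm absv ('e_i : 'rV[F0]_m) <= 1.
Proof.
apply: vnorm_R0 => j; rewrite mxE; case: (_ && _) => /=.
  exact: R0_1.
exact: R0_0.
Qed.

Lemma diff_ident m c (g : 'rV[F0]_m -> 'rV[F0]_c) (Dg : 'rV[F0]_m -> Prop) (A B : 'M[F0]_(m, c)) :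
  is_diff0 absv Dg g A ->
  (forall e, 0 < e -> exists de, 0 < de /\ forall x, vnorm absv x <= de ->
      vnorm absv (g x - g 0 - x *m B) <= e * vnorm absv x) ->
  A = B.
Proof.
move=> hA hB; apply/row_matrixP => i; apply/eqP; rewrite -subr_eq0; apply/eqP.
apply: vnorm_eq0; apply: le_pos0 => e e0.
have [d1 [d10 h1]] := hA e e0.
have [d2 [d20 h2]] := hB e e0.
have md : 0 < Num.min d1 d2 by rewrite lt_min d10 d20.
have [k hk] := pw_small _ md.
set x : 'rV[F0]_m := t ^+ k *: 'e_i.
have hx : vnorm absv x <= pw k.
  by rewrite /x vnorm_tZ -[X in _ <= X]mulr1 ler_wpM2l ?pw_ge0 ?vn_delta.
have hx1 : vnorm absv x < d1 by apply: le_lt_trans hx (lt_le_trans hk _); rewrite ge_min lexx.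
have hx2 : vnorm absv x <= d2 by apply: ltW; apply: le_lt_trans hx (lt_le_trans hk _); rewrite ge_min lexx orbT.
have [_ e1] := h1 x hx1.
have e2 := h2 x hx2.
have hxA : forall C : 'M[F0]_(m, c), x *m C = t ^+ k *: row i C by move=> C; rewrite /x -scalemxAl -rowE.
have : vnorm absv (x *m A - x *m B) <= e * vnorm absv x.
  have -> : x *m A - x *m B = (g x - g 0 - x *m B) - (g x - g 0 - x *m A) by rowring.
  exact: vnormB_le.
rewrite !hxA -scalerBr vnorm_tZ => h.
have := leT h (ler_wpM2l (ltW e0) hx).
by rewrite mulrC ler_pM2r ?pw_gt0.
Qed.

Lemma choice_fun (A B : Type) (Pr : A -> B -> Prop) :
  (forall x, exists y, Pr x y) -> exists f : A -> B, forall x, Pr x (f x).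
Proof.
move=> h; exists (fun x => proj1_sig (constructive_indefinite_description _ (h x))).
by move=> x; case: (constructive_indefinite_description _ (h x)).
Qed.

Fixpoint iters (X : Type) (x0 : X) (f : nat -> X -> X) (k : nat) : X :=
  match k with 0%N => x0 | k'.+1 => f k' (iters X x0 f k') end.

Lemma density n c (P : 'I_n -> F0 -> Prop) (Lm : 'M[F0]_(n, c)) :
  (forall i, goodmod (P i)) ->
  (forall y : 'rV[F0]_c, exists N z, rg _ P z /\ t ^+ N *: y = z *m Lm) ->
  exists K, forall y : 'rV[F0]_c, vnorm absv y <= 1 -> forall l,
    exists z, rg _ P z /\ vnorm absv (t ^+ K *: y - z *m Lm) <= pw l.
Proof.
move=> hP hs.
have claim : exists j y0 m, forall y, vnorm absv (y - y0) <= pw m -> forall l,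
    exists z, rg _ P z /\ vnorm absv (t ^+ j *: y - z *m Lm) <= pw l.
  apply: NNPP => hneg.
  have H : forall jym : nat * 'rV[F0]_c * nat, exists yl : 'rV[F0]_c * nat,
      vnorm absv (yl.1 - jym.1.2) <= pw jym.2 /\
      forall z, rg _ P z -> pw yl.2 < vnorm absv (t ^+ jym.1.1 *: yl.1 - z *m Lm).
    case=> [[j y0] m]; apply: NNPP => h2; apply: hneg; exists j, y0, m => y hy l.
    apply: NNPP => h3; apply: h2; exists (y, l); split => // z hz.
    rewrite ltNge; apply/negP => hle; apply: h3; exists z; split => //.
  have [stp hstp] := choice_fun _ _ _ H.
  pose nxt (k : nat) (p : 'rV[F0]_c * nat) :=
    ((stp (k, p.1, p.2)).1, (maxn (stp (k, p.1, p.2)).2 p.2).+1).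
  pose sq := iters _ (0 : 'rV[F0]_c, 0%N) nxt.
  pose Y k := (sq k).1.
  pose mm k := (sq k).2.
  pose ll k := (stp (k, Y k, mm k)).2.
  have Fa : forall k, vnorm absv (Y k.+1 - Y k) <= pw (mm k).
    by move=> k; case: (hstp (k, Y k, mm k)).
  have Fb : forall k, mm k.+1 = (maxn (ll k) (mm k)).+1 by [].
  have Fc : forall k z, rg _ P z -> pw (ll k) < vnorm absv (t ^+ k *: Y k.+1 - z *m Lm).
    by move=> k; case: (hstp (k, Y k, mm k)).
  have mmS : forall k, (mm k < mm k.+1)%N by move=> k; rewrite Fb ltnS leq_maxr.
  have mm_ge : forall k, (k <= mm k)%N.
    elim=> [|k IH] //; exact: leq_ltn_trans IH (mmS k).
  have mm_mono : {homo mm : i j / (i <= j)%N}.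
    apply: homo_leq => //; [exact: leq_trans | by move=> k; apply: ltnW].
  have vnY : forall k, vnorm absv (Y k) <= 1.
    elim=> [|k IH]; first by rewrite /Y /= vnorm0 ler01.
    have -> : Y k.+1 = Y k + (Y k.+1 - Y k) by rewrite addrC subrK.
    by apply: vnormD_le => //; apply: leT (Fa k) (pw_le1 _).
  have hR : forall i : 'I_c, goodmod ((fun _ => R0) i) by move=> i; exact: goodR0.
  have [ys [_ hys]] := rg_lim _ _ hR (fun k => Y k.+1)
    (fun k i => le1_R0 _ (leT (le_vnorm _ _ i) (vnY k.+1)))
    (fun k => leT (Fa k.+1) (pw_le _ _ (mm_ge k.+1))).
  have nest : forall k i, vnorm absv (Y (k.+1 + i)%N - Y k.+1) <= pw (mm k.+1).
    move=> k; elim=> [|i IH]; first by rewrite addn0 subrr vnorm0 pw_ge0.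
    have -> : Y (k.+1 + i.+1)%N - Y k.+1 = (Y (k.+1 + i)%N.+1 - Y (k.+1 + i)%N) + (Y (k.+1 + i)%N - Y k.+1).
      by rewrite addnS addrA subrK.
    apply: vnormD_le => //; apply: (leT (Fa _)); apply: pw_le.
    by apply: mm_mono; rewrite leq_addr.
  have hlim : forall k, vnorm absv (ys - Y k.+1) <= pw (mm k.+1).
    move=> k; set i := mm k.+1.
    have -> : ys - Y k.+1 = (ys - Y (k + i)%N.+1) + (Y (k.+1 + i)%N - Y k.+1).
      by rewrite addSn addrA subrK.
    apply: vnormD_le; last exact: nest.
    apply: (leT (hys (k + i)%N)); apply: pw_le.
    by rewrite ltnW // ltnS leq_addl.
  have [N [z [hz hzN]]] := hs ys.
  have := Fc N z hz; rewrite -hzN -scalerBr vnorm_tZ => h.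
  have h2 : pw N * vnorm absv (Y N.+1 - ys) <= pw (ll N).
    rewrite vnormBC; apply: leT (ler_wpM2r (vnorm_ge0 _ _) (pw_le1 N)) _.
    rewrite mul1r; apply: (leT (hlim N)); apply: pw_le.
    by rewrite Fb ltnW // ltnS leq_maxl.
  by move: h; rewrite ltNge h2.
have [j [y0 [m hQ]]] := claim.
exists (j + m)%N => y hy l.
have h1 : vnorm absv (y0 + t ^+ m *: y - y0) <= pw m.
  by rewrite addrC addKr vnorm_tZ -[X in _ <= X]mulr1 ler_wpM2l ?pw_ge0.
have h2 : vnorm absv (y0 - y0) <= pw m by rewrite subrr vnorm0 pw_ge0.
have [z1 [hz1 e1]] := hQ _ h1 l.
have [z2 [hz2 e2]] := hQ _ h2 l.
exists (z1 - z2); split; first exact: rgB.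
have -> : t ^+ (j + m) *: y - (z1 - z2) *m Lm =
    (t ^+ j *: (y0 + t ^+ m *: y) - z1 *m Lm) - (t ^+ j *: y0 - z2 *m Lm).
  rewrite mulmxBl exprD; rowring.
exact: vnormB_le.
Qed.

Lemma tclear (N m : nat) (v : F0) : (m <= N)%N -> t ^+ N * (t ^- m * v) = t ^+ (N - m) * v.
Proof.
move=> h; have -> : t ^+ N = t ^+ (N - m) * t ^+ m by rewrite -exprD subnK.
rewrite -mulrA; congr (_ * _); rewrite mulrA divff ?mul1r // expf_neq0 //; exact: t_neq0.
Qed.

Lemma lsub0 m1 m2 : lsubmx (0 : 'rV[F0]_(m1 + m2)) = 0.
Proof. by apply/rowP => i; rewrite !mxE. Qed.
Lemma rsub0 m1 m2 : rsubmx (0 : 'rV[F0]_(m1 + m2)) = 0.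
Proof. by apply/rowP => i; rewrite !mxE. Qed.

Lemma main_thm (a b c : nat)
  (Omega : 'rV[F0]_a -> 'rV[F0]_b -> Prop)
  (f : 'rV[F0]_a -> 'rV[F0]_b -> 'rV[F0]_c)
  (hOm0 : Omega 0 0)
  (hfan : analytic_on absv (fun z : 'rV[F0]_(a + b) => Omega (lsubmx z) (rsubmx z))
                            (fun z => f (lsubmx z) (rsubmx z)))
  (hf0 : f 0 0 = 0)
  (Da : 'M[F0]_(a, c)) (Db : 'M[F0]_(b, c))
  (hDa : is_diff0 absv (fun x => Omega x 0) (fun x => f x 0) Da)
  (hDb : is_diff0 absv (fun y => Omega 0 y) (fun y => f 0 y) Db)
  (hsurj : forall y : 'rV[F0]_c, exists (x : 'rV[F0]_a) (z : 'rV[F0]_b),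
      (forall i, invert_t V t (x ord0 i)) /\ (forall j, invert_t W t (z ord0 j)) /\
      y = x *m Da + z *m Db) :
  exists eps : R, 0 < eps /\
    forall y : 'rV[F0]_c, vnorm absv y <= eps ->
      exists (v : 'rV[F0]_a) (w : 'rV[F0]_b),
        (forall i, V (v ord0 i)) /\ (forall j, W (w ord0 j)) /\ Omega v w /\ f v w = y.
Proof.
set D := fun z : 'rV[F0]_(a + b) => Omega (lsubmx z) (rsubmx z).
set Fn := fun z : 'rV[F0]_(a + b) => f (lsubmx z) (rsubmx z).
pose PVW := fun i : 'I_(a + b) => if (i < a)%N then V else W.
have hPVW : forall i, goodmod (PVW i).
  by move=> i; rewrite /PVW; case: ifP => _; [exact: goodV | exact: goodW].
have hD0 : D 0 by rewrite /D lsub0 rsub0.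
have Fn0 : Fn 0 = 0 by rewrite /Fn lsub0 rsub0.
have [G hG] := strict_diff _ _ D Fn hD0 hfan.
have eDa : Da = usubmx G.
  apply: (diff_ident _ _ _ _ _ _ hDa) => e e0.
  have [j hj] := hG e e0.
  exists (pw j); split; first exact: pw_gt0.
  move=> x hx.
  have hp : vnorm absv (row_mx x (0 : 'rV[F0]_b)) <= pw j.
    by apply: vnorm_row_mx => //; rewrite vnorm0 pw_ge0.
  have hq : vnorm absv (0 : 'rV[F0]_(a + b)) <= pw j by rewrite vnorm0 pw_ge0.
  have [_ h] := hj _ _ hp hq.
  move: h; rewrite Fn0 !subr0 /Fn row_mxKl row_mxKr.
  rewrite -{1}[G]vsubmxK mul_row_col mul0mx addr0 hf0 subr0 => h.
  apply: leT h _; apply: ler_wpM2l; first exact: ltW.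
  by apply: vnorm_row_mx; rewrite ?vnorm0 ?vnorm_ge0.
have eDb : Db = dsubmx G.
  apply: (diff_ident _ _ _ _ _ _ hDb) => e e0.
  have [j hj] := hG e e0.
  exists (pw j); split; first exact: pw_gt0.
  move=> x hx.
  have hp : vnorm absv (row_mx (0 : 'rV[F0]_a) x) <= pw j.
    by apply: vnorm_row_mx => //; rewrite vnorm0 pw_ge0.
  have hq : vnorm absv (0 : 'rV[F0]_(a + b)) <= pw j by rewrite vnorm0 pw_ge0.
  have [_ h] := hj _ _ hp hq.
  move: h; rewrite Fn0 !subr0 /Fn row_mxKl row_mxKr.
  rewrite -{1}[G]vsubmxK mul_row_col mul0mx add0r hf0 subr0 => h.
  apply: leT h _; apply: ler_wpM2l; first exact: ltW.
  by apply: vnorm_row_mx; rewrite ?vnorm0 ?vnorm_ge0.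
have eG : G = col_mx Da Db by rewrite eDa eDb vsubmxK.

have hs' : forall y : 'rV[F0]_c, exists N z, rg _ PVW z /\ t ^+ N *: y = z *m G.
  move=> y; have [x [z [hx [hz ey]]]] := hsurj y.
  have [nx hnx] := fin_all_exists hx.
  have [vx hvx] := fin_all_exists (fun i => hnx i).
  have [nz hnz] := fin_all_exists hz.
  have [vz hvz] := fin_all_exists (fun i => hnz i).
  set N := (\sum_i nx i + \sum_j nz j)%N.
  exists N, (t ^+ N *: row_mx x z); split; last first.
    by rewrite -scalemxAl eG mul_row_col ey.
  move=> i; rewrite mxE /PVW.
  case: (splitP i) => [i' ei|i' ei].
    have -> : i = lshift b i' by apply: val_inj.
    rewrite row_mxEl /=.
    case: (hvx i') => hv ->; rewrite tclear; first exact: gmX goodV _ _ hv.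
    by rewrite /N (bigD1 i') //= -addnA leq_addr.
  have -> : i = rshift a i' by apply: val_inj.
  rewrite row_mxEr /=.
  case: (hvz i') => hv ->; rewrite tclear; first exact: gmX goodW _ _ hv.
  by rewrite /N (bigD1 i') //= addnCA leq_addr.
have [K hK] := density _ _ _ G hPVW hs'.
have eK : 0 < pw (K + 1)%N := pw_gt0 _.
have [j hj] := hG _ eK.
have [C [C0 hC]] := vnorm_mulmx _ _ G.
exists (pw (K + j + 1)%N); split; first exact: pw_gt0.
move=> y hy.

have step : forall ku : nat * 'rV[F0]_(a + b), exists d : 'rV[F0]_(a + b),
    rg _ PVW ku.2 -> vnorm absv ku.2 <= pw (j + 1)%N ->
    vnorm absv (y - Fn ku.2) <= pw (K + (j + 1 + ku.1))%N ->
    [/\ rg _ PVW d, vnorm absv d <= pw (j + 1 + ku.1)%N &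
        vnorm absv (y - Fn ku.2 - d *m G) <= pw (j + 1 + ku.1 + (K + 1))%N].
  case=> k u /=.
  case: (classic (vnorm absv (y - Fn u) <= pw (K + (j + 1 + k))%N)); last first.
    by move=> h; exists 0 => _ _ /h.
  move=> hr.
  set s := (j + 1 + k)%N.
  have [r' [hr' er]] := vnorm_divt _ _ _ hr.
  have hr1 : vnorm absv r' <= 1 by apply: vnorm_R0.
  have [z [hz ez]] := hK r' hr1 (K + 1)%N.
  exists (t ^+ s *: z) => _ _ _; split.
  - exact: rgX.
  - by rewrite vnorm_tZ -[X in _ <= X]mulr1 ler_wpM2l ?pw_ge0 // (rg_le1 _ _ hPVW _ hz).
  - have -> : y - Fn u - (t ^+ s *: z) *m G = t ^+ s *: (t ^+ K *: r' - z *m G).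
      by rewrite er -scalemxAl scalerBr scalerA -exprD addnC.
    by rewrite vnorm_tZ pwD ler_wpM2l ?pw_ge0.
have [nst hnst] := choice_fun _ _ _ step.
pose U := iters _ (0 : 'rV[F0]_(a + b)) (fun k u => u + nst (k, u)).
have inv : forall k, [/\ rg _ PVW (U k), vnorm absv (U k) <= pw (j + 1)%N &
                       vnorm absv (y - Fn (U k)) <= pw (K + (j + 1 + k))%N].
  elim=> [|k [IH1 IH2 IH3]].
    split; first exact: rg0.
      by rewrite /U /= vnorm0 pw_ge0.
    by rewrite /U /= Fn0 subr0 addn0 addnA.
  have [hd1 hd2 hd3] := hnst (k, U k) IH1 IH2 IH3; rewrite /= in hd1 hd2 hd3.
  set d := nst (k, U k) in hd1 hd2 hd3.
  have eU : U k.+1 = U k + d by [].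
  have hdj : vnorm absv d <= pw (j + 1)%N by apply: leT hd2 (pw_le _ _ _); rewrite leq_addr.
  have hUj : vnorm absv (U k) <= pw j by apply: leT IH2 (pw_le _ _ _); rewrite leq_addr.
  have hU'j : vnorm absv (U k + d) <= pw j.
    by apply: vnormD_le => //; apply: leT hdj (pw_le _ _ _); rewrite leq_addr.
  rewrite eU; split.
  - exact: rgD.
  - exact: vnormD_le.
  - have [_ hs] := hj _ _ hU'j hUj.
    have -> : y - Fn (U k + d) = (y - Fn (U k) - d *m G)
        - (Fn (U k + d) - Fn (U k) - (U k + d - U k) *m G).
      have -> : U k + d - U k = d by rowring.
      by rowring.
    apply: vnormB_le; first by apply: leT hd3 (pw_le _ _ _); lia.
    apply: leT hs _.
    have -> : U k + d - U k = d by rowring.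
    apply: leT (ler_wpM2l (pw_ge0 _) hd2) _.
    by rewrite -pwD; apply: pw_le; lia.
have cauchy : forall k, vnorm absv (U k.+1 - U k) <= pw k.+1.
  move=> k; have [h1 h2 h3] := inv k.
  have [_ hd _] := hnst (k, U k) h1 h2 h3; rewrite /= in hd.
  have eU : U k.+1 = U k + nst (k, U k) by [].
  have -> : U k.+1 - U k = nst (k, U k) by rewrite eU; rowring.
  by apply: leT hd (pw_le _ _ _); lia.
have [u [hu hlim]] := rg_lim _ _ hPVW U (fun k => let: And3 h _ _ := inv k in h) cauchy.
have huj : vnorm absv u <= pw (j + 1)%N.
  have [_ h2 _] := inv j.
  have -> : u = (u - U j) + U j by rowring.
  by apply: vnormD_le => //; apply: leT (hlim j) (pw_le _ _ _); lia.
have huj' : vnorm absv u <= pw j by apply: leT huj (pw_le _ _ _); lia.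
have hres : forall k, vnorm absv (y - Fn u) <= (1 + C) * pw k.+1.
  move=> k; have [_ h2 h3] := inv k.
  have hUk : vnorm absv (U k) <= pw j by apply: leT h2 (pw_le _ _ _); lia.
  have [_ hs] := hj _ _ huj' hUk.
  have -> : y - Fn u = (y - Fn (U k)) - (Fn u - Fn (U k) - (u - U k) *m G) - (u - U k) *m G.
    by rowring.
  have hB : pw k.+1 <= (1 + C) * pw k.+1 by rewrite ler_peMl ?pw_ge0 // lerDl.
  apply: vnormB_le; first apply: vnormB_le.
  - by apply: leT h3 (leT (pw_le _ _ _) hB); lia.
  - apply: leT hs (leT _ hB).
    rewrite -[X in _ <= X]mul1r; apply: ler_pM; rewrite ?pw_ge0 ?vnorm_ge0 ?pw_le1 //.
  - apply: leT (hC _) _; apply: ler_pM; rewrite ?vnorm_ge0 ?lerDr //.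
have Fu : Fn u = y.
  apply/eqP; rewrite eq_sym -subr_eq0; apply/eqP; apply: vnorm_eq0; apply: le_pos0 => e e0.
  have C1 : 0 < 1 + C by apply: ltr_wpDr.
  have [k hk] := pw_small (e / (1 + C)) (divr_gt0 e0 C1).
  apply: leT (hres k) _.
  rewrite mulrC -ler_pdivlMr //; apply: ltW.
  exact: le_lt_trans (pw_le _ _ (leqnSn k)) hk.
have Du : D u by have [] := hj _ _ huj' huj'.
exists (lsubmx u), (rsubmx u); split.
  move=> i; rewrite mxE; have := hu (lshift b i); rewrite /PVW /=.
  by rewrite ltn_ord.
split.
  move=> i; rewrite mxE; have := hu (rshift a i); rewrite /PVW /=.
  by rewrite ltnNge leq_addr.
by split.
Qed.
End Val.

Theorem proposition3p2
  (R : realType) (F0 : fieldType) (absv : F0 -> R) (alpha : R) (t : F0)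
  (T R0 F1 F2 V W : F0 -> Prop)
  (* R0: complete DVR with uniformizer t and fraction field F0 *)
  (hR0 : is_dvr_unif R0 t)
  (hR0frac : forall x : F0, x != 0 -> exists n : int, exists u, unit_of R0 u /\ x = t ^ n * u)
  (hR0c : tadic_complete R0 t)
  (* the absolute value |t^n u| = alpha^(-n) *)
  (halpha : 1 < alpha)
  (habs0 : absv 0 = 0)
  (habs : forall (n : int) (u : F0), unit_of R0 u -> absv (t ^ n * u) = alpha ^ (- n))
  (* T: complete DVR with uniformizer t, contained in R0 *)
  (hT : is_dvr_unif T t) (hTc : tadic_complete T t)
  (hTR0 : forall x, T x -> R0 x)
  (* F1, F2 subfields of F0 containing T *)
  (hF1 : is_subfield F1) (hF2 : is_subfield F2)
  (hTF1 : forall x, T x -> F1 x) (hTF2 : forall x, T x -> F2 x)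
  (* V, W *)
  (hVsub : forall x, V x -> F1 x /\ R0 x) (hWsub : forall x, W x -> F2 x /\ R0 x)
  (hVmod : is_submodule T V) (hWmod : is_submodule T W)
  (hVc : tadic_complete V t) (hWc : tadic_complete W t)
  (hVW : forall x, R0 x -> exists v w, V v /\ W w /\ x = v + w)
  (hVt : forall x, (V x /\ exists r, R0 r /\ x = t * r) <-> exists v, V v /\ x = t * v)
  (hWt : forall x, (W x /\ exists r, R0 r /\ x = t * r) <-> exists w, W w /\ x = t * w)
  (* a, b, c positive; Omega open neighbourhood of (0,0); f analytic on Omega *)
  (a b c : nat) (ha : (0 < a)%N) (hb : (0 < b)%N) (hc : (0 < c)%N)
  (Omega : 'rV[F0]_a -> 'rV[F0]_b -> Prop)
  (f : 'rV[F0]_a -> 'rV[F0]_b -> 'rV[F0]_c)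
  (hOmopen : is_open absv (fun z : 'rV[F0]_(a + b) => Omega (lsubmx z) (rsubmx z)))
  (hOm0 : Omega 0 0)
  (hfan : analytic_on absv (fun z : 'rV[F0]_(a + b) => Omega (lsubmx z) (rsubmx z))
                            (fun z => f (lsubmx z) (rsubmx z)))
  (* (i) *)
  (hf0 : f 0 0 = 0)
  (* (ii) *)
  (Da : 'M[F0]_(a, c)) (Db : 'M[F0]_(b, c))
  (hDa : is_diff0 absv (fun x => Omega x 0) (fun x => f x 0) Da)
  (hDb : is_diff0 absv (fun y => Omega 0 y) (fun y => f 0 y) Db)
  (hsurj : forall y : 'rV[F0]_c, exists (x : 'rV[F0]_a) (z : 'rV[F0]_b),
      (forall i, invert_t V t (x ord0 i)) /\ (forall j, invert_t W t (z ord0 j)) /\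
      y = x *m Da + z *m Db) :
  exists eps : R, 0 < eps /\
    forall y : 'rV[F0]_c, vnorm absv y <= eps ->
      exists (v : 'rV[F0]_a) (w : 'rV[F0]_b),
        (forall i, V (v ord0 i)) /\ (forall j, W (w ord0 j)) /\ Omega v w /\ f v w = y.

Proof.
exact: (main_thm _ _ _ _ _ _ _ _ _ _ _ hR0 hR0frac hR0c halpha habs0 habs hT hTR0 hVsub hWsub hVmod hWmod hVc hWc hVt hWt a b c Omega f hOm0 hfan hf0 Da Db hDa hDb hsurj).
Qed.
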